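(* Let $L\ge2$ and $q\in[1,2]$. Under balance $\lambda=0$, the weight decay $\frac12\sum_{i=1}^L\|w_i\|_{L_2}^2$ expressed in $x=\prod_iw_i$ equals $\frac L2\sum_{j\in[n]}|x_j|^{2/L}$. This function coincides with the on-manifold regularizer $M_{\mathrm{reg}}(x)=\frac{L}{L(2-q)+q}\sum_{j\in[n]}|x_j|^{2-q\frac{L-1}{L}}$ (for all $x\in\mathbb{R}^n$) if and only if $q=2$.
   Context: Setting: $w_1,\dots,w_L\in\mathbb{R}^n$, $x=\prod_iw_i$ entrywise; balance $\lambda=0$ means $|w_i|^q=|w_j|^q$ entrywise for all $i,j$, so $|w_i|=|x|^{1/L}$. $M_{\mathrm{reg}}$ is the regularizer induced on $x$ by decoupled weight decay under $L_p$ steepest descent ($1/p+1/q=1$) with mirror map $\nabla^2R(x)=\operatorname{diag}(1/(L|x_j|^{q(L-1)/L}))$, defined as $\sum_j\int^{x_j}\partial_j^2R(s)\,Ls\,ds$. *)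

(* Defs.v *)
From mathcomp Require Import all_boot all_order all_algebra.
From mathcomp Require Import all_classical all_reals all_analysis.
Set Implicit Arguments. Unset Strict Implicit. Unset Printing Implicit Defensive.
Import Order.TTheory GRing.Theory Num.Theory.
Local Open Scope ring_scope.

Definition prod_layers (R : realType) (L n : nat) (w : 'I_L -> 'I_n -> R)
  : 'I_n -> R := fun j => \prod_(i < L) w i j.

Definition balanced (R : realType) (L n : nat) (q : R) (w : 'I_L -> 'I_n -> R)
  : Prop := forall (i i' : 'I_L) (j : 'I_n), `|w i j| `^ q = `|w i' j| `^ q.

Definition weight_decay (R : realType) (L n : nat) (w : 'I_L -> 'I_n -> R) : R :=
  2^-1 * \sum_(i < L) \sum_(j < n) (w i j) ^+ 2.

Definition wd_in_x (R : realType) (L n : nat) (x : 'I_n -> R) : R :=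
  (L%:R / 2) * \sum_(j < n) `|x j| `^ (2 / L%:R).

Definition Mreg (R : realType) (L n : nat) (q : R) (x : 'I_n -> R) : R :=
  (L%:R / (L%:R * (2 - q) + q)) *
  \sum_(j < n) `|x j| `^ (2 - q * ((L%:R - 1) / L%:R)).

(* Main.v *)
Require Import Defs.
From mathcomp Require Import all_boot all_order all_algebra.
From mathcomp Require Import all_classical all_reals all_analysis.
From mathcomp Require Import ring lra.
Import Order.TTheory GRing.Theory Num.Theory.
Local Open Scope ring_scope.

Theorem corollary4 (R : realType) (L n : nat) (q : R)
  (hL : (2 <= L)%N) (hn : (0 < n)%N) (hq1 : 1 <= q) (hq2 : q <= 2) :
  (forall w : 'I_L -> 'I_n -> R, balanced q w ->
     weight_decay w = wd_in_x L (prod_layers w)) /\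
  ((forall x : 'I_n -> R, wd_in_x L x = Mreg L q x) <-> q = 2).
Proof.
have L0 : (0 < L)%N by apply: leq_trans hL.
have LR0 : (L%:R : R) != 0 by rewrite pnatr_eq0 -lt0n.
have q0 : 0 < q by apply: lt_le_trans hq1.
split.
  move=> w hb.
  pose i0 : 'I_L := Ordinal L0.
  pose a j := `|w i0 j|.
  have ha : forall i j, `|w i j| = a j.
    move=> i j; apply: (powR_injective q0); rewrite ?inE ?nnegrE ?normr_ge0 //.
    by rewrite /= /a; apply: hb.
  rewrite /weight_decay /wd_in_x /prod_layers.
  rewrite exchange_big /=.
  have -> : \sum_(j < n) \sum_(i < L) w i j ^+ 2 = \sum_(j < n) L%:R * a j ^+ 2.
    apply: eq_bigr => j _.
    rewrite (eq_bigr (fun _ => a j ^+ 2)); last first.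
      by move=> i _; rewrite -real_normK ?num_real // ha.
    by rewrite sumr_const card_ord mulr_natl.
  have -> : \sum_(j < n) `|\prod_(i < L) w i j| `^ (2 / L%:R)
      = \sum_(j < n) a j ^+ 2.
    apply: eq_bigr => j _.
    rewrite normr_prod (eq_bigr (fun _ => a j)); last by move=> i _; rewrite ha.
    rewrite prodr_const card_ord -powR_mulrn ?normr_ge0 // -powRrM.
    rewrite mulrCA divff // mulr1 -[2]/(2%:R) powR_mulrn ?normr_ge0 //.
  by rewrite -mulr_sumr mulrA [2^-1 * _]mulrC.
split.
  move=> /(_ (fun _ => 1)).
  rewrite /wd_in_x /Mreg normr1 powR1 sumr_const card_ord.
  have n0 : (1 *+ n : R) != 0 by rewrite pnatr_eq0 -lt0n.
  move=> /(mulIf n0) H.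
  have D0 : (L%:R * (2 - q) + q) != 0.
    rewrite gt_eqF // ltr_pwDr //; apply: mulr_ge0; first by rewrite ler0n.
    by rewrite subr_ge0.
  have : (L%:R * (2 - q) + q) = 2.
    move: H => /(congr1 (fun t => L%:R^-1 * t)); rewrite !mulrA mulVf // !mul1r.
    by move=> h; rewrite -[LHS]invrK -h invrK.
  have L1 : (1 : R) < L%:R by rewrite ltr1n.
  move=> E.
  have : (L%:R - 1) * (2 - q) = 0.
    by transitivity (L%:R * (2 - q) + q - 2); [ring | rewrite E subrr].
  move/eqP; rewrite mulf_eq0 subr_eq0 => /orP [/eqP|]; first by move=> h; rewrite h ltxx in L1.
  by rewrite subr_eq0 => /eqP ->.
move=> -> x; rewrite /wd_in_x /Mreg.
have e1 : L%:R * (2 - 2) + 2 = 2 :> R by rewrite subrr mulr0 add0r.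
have e2 : 2 - 2 * ((L%:R - 1) / L%:R) = 2 / L%:R :> R.
  by rewrite mulrBl divff // mul1r mulrBr mulr1 opprB addrC subrK.
by rewrite e1 e2.
Qed.
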